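(* For every integer $n \geq 2$, $D_n = (n-1)\left[D_{n-1} + D_{n-2}\right] + (-1)^{n-1}$, with the convention $D_0 = 0$.
   Context: A linear arrangement of $\{1,\ldots,n\}$ is a sequence $a_1\cdots a_n$ in which each of $1,\ldots,n$ appears exactly once. It contains the pattern $ij$ if $a_t=i$ and $a_{t+1}=j$ for some $t$; otherwise it avoids it. $D_n$ is the number of linear arrangements of $\{1,\ldots,n\}$ avoiding all of the patterns $12, 23, \ldots, (n-1)n, n1$; $D_0=0$. *)

(* Defs.v *)
From mathcomp Require Import all_boot all_algebra.
Set Implicit Arguments. Unset Strict Implicit. Unset Printing Implicit Defensive.

(* The list
   [permutations (iota 1 n)] enumerates all of them without duplicates. *)
Definition arrangements (n : nat) : seq (seq nat) := permutations (iota 1 n).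

Definition contains_pat (a : seq nat) (i j : nat) : bool :=
  has (fun t => (nth 0 a t == i) && (nth 0 a t.+1 == j)) (iota 0 (size a).-1).

Definition patterns (n : nat) : seq (nat * nat) :=
  [seq (i, i.+1) | i <- iota 1 n.-1] ++ [:: (n, 1)].

Definition avoids_all (n : nat) (a : seq nat) : bool :=
  all (fun p => ~~ contains_pat a p.1 p.2) (patterns n).

Definition D (n : nat) : nat :=
  if n == 0 then 0 else count (avoids_all n) (arrangements n).

(* Main.v *)
Require Import Defs.
From mathcomp Require Import all_boot all_algebra.
From mathcomp Require Import zify ring.
Import GRing.Theory.

Definition pairs (s : seq nat) : seq (nat * nat) := zip s (behead s).

Lemma pairs_cons a s :
  pairs (a :: s) = if s is b :: _ then (a, b) :: pairs s else [::].
Proof. by case: s. Qed.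

Lemma pairs_cat s z t : pairs (s ++ z :: t) = pairs (rcons s z) ++ pairs (z :: t).
Proof.
elim: s => [|a s IH] //=.
rewrite pairs_cons [pairs (a :: rcons s z)]pairs_cons.
case: s IH => [|b s] IH //=.
by rewrite IH.
Qed.

Lemma pairs_rcons a s b : pairs (rcons (a :: s) b) = rcons (pairs (a :: s)) (last a s, b).
Proof.
elim: s a => [|c s IH] a //=.
by rewrite pairs_cons IH.
Qed.

Lemma in_pairs_cons u v z q :
  ((u, v) \in pairs (z :: q)) = ((u == z) && (q != [::]) && (v == head 0 q)) || ((u, v) \in pairs q).
Proof.
rewrite pairs_cons; case: q => [|w q]; first by rewrite in_nil andbF.
by rewrite in_cons xpair_eqE /= andbT.
Qed.

Lemma pairs_fst u v s : (u, v) \in pairs s -> u \in s.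
Proof.
elim: s => [|z s IH] //.
rewrite in_pairs_cons in_cons => /orP [/andP [/andP [-> _] _] // | /IH ->].
by rewrite orbT.
Qed.

Lemma pairs_snd u v s : (u, v) \in pairs s -> v \in s.
Proof.
elim: s => [|z s IH] //.
rewrite in_pairs_cons in_cons => /orP [/andP [/andP [_ ] ] | /IH ->]; last by rewrite orbT.
case: s {IH} => [|w s] //= _ /eqP ->; by rewrite in_cons eqxx orbT.
Qed.

Lemma pairs_snd_cons u v z s : (u, v) \in pairs (z :: s) -> v \in s.
Proof.
rewrite in_pairs_cons => /orP [/andP [/andP [_ ] ] | /pairs_snd //].
case: s => [|w s] //= _ /eqP ->; by rewrite in_cons eqxx.
Qed.

Lemma pairs_rcons_fst u v p x : (u, v) \in pairs (rcons p x) -> u \in p.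
Proof.
elim: p => [|a p IH] //=.
rewrite in_pairs_cons in_cons => /orP [/andP [/andP [-> _] _] // | /IH ->].
by rewrite orbT.
Qed.

Lemma pairs_split x y s : (x, y) \in pairs s -> exists p q, s = p ++ x :: y :: q.
Proof.
elim: s => [|z s IH] //.
rewrite in_pairs_cons => /orP [/andP [/andP [/eqP -> ] ] | /IH [p [q ->]]].
  case: s {IH} => [|w s] //= _ /eqP ->; by exists [::], s.
by exists (z :: p), q.
Qed.

Lemma pairs_neq u v s : uniq s -> (u, v) \in pairs s -> u != v.
Proof.
move=> Us /pairs_split [p [q E]]; move: Us; rewrite E cat_uniq /= in_cons.
by case: (u == v) => //=; rewrite !andbF.
Qed.

Lemma contains_pairs a i j : contains_pat a i j = ((i, j) \in pairs a).
Proof.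
rewrite /contains_pat; elim: a => [|z a IH] //=.
rewrite in_pairs_cons -IH; case: a {IH} => [|w a] //=.
  by rewrite andbF.
rewrite (iotaDl 1 0) has_map andbT [j == w]eq_sym [i == z]eq_sym.
by congr (_ || _); apply: eq_has => t /=; rewrite add1n.
Qed.

Lemma count_bij (T : eqType) (s1 s2 : seq T) (P Q : pred T) (f g : T -> T) :
  uniq s1 -> uniq s2 ->
  (forall a, a \in s1 -> P a -> [/\ f a \in s2, Q (f a) & g (f a) = a]) ->
  (forall b, b \in s2 -> Q b -> [/\ g b \in s1, P (g b) & f (g b) = b]) ->
  count P s1 = count Q s2.
Proof.
move=> U1 U2 H1 H2; rewrite -!size_filter.
have pe : perm_eq (map f (filter P s1)) (filter Q s2).
  apply: uniq_perm.
  - rewrite map_inj_in_uniq ?filter_uniq // => a a'.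
    rewrite !mem_filter => /andP [Pa a1] /andP [Pa' a1'] E.
    have [_ _ <-] := H1 a a1 Pa; have [_ _ <-] := H1 a' a1' Pa'.
    by rewrite E.
  - exact: filter_uniq.
  move=> b; apply/mapP/idP.
    case=> a; rewrite mem_filter => /andP [Pa a1] ->.
    by have [? ? _] := H1 a a1 Pa; rewrite mem_filter; apply/andP.
  rewrite mem_filter => /andP [Qb b2].
  have [g1 Pg fg] := H2 b b2 Qb.
  by exists (g b) => //; rewrite mem_filter Pg.
by rewrite -(perm_size pe) size_map.
Qed.

Fixpoint ins (x y : nat) (s : seq nat) : seq nat :=
  match s with
  | [::] => [::]
  | z :: s' => if z == x then z :: y :: s' else z :: ins x y s'
  end.

Lemma ins_cat x y p q : x \notin p -> ins x y (p ++ x :: q) = p ++ x :: y :: q.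
Proof.
elim: p => [|a p IH] /=; first by rewrite eqxx.
by rewrite in_cons negb_or => /andP [/negbTE]; rewrite eq_sym => -> /IH ->.
Qed.

Lemma rem_cat2 (y : nat) p s : y \notin p -> rem y (p ++ s) = p ++ rem y s.
Proof.
elim: p => [|a p IH] //=.
by rewrite in_cons negb_or => /andP [ne /IH ->]; rewrite eq_sym (negbTE ne).
Qed.

Definition avoid (E : seq (nat * nat)) (a : seq nat) : bool :=
  all (fun e => e \notin pairs a) E.

Definition ren (x y z : nat) : nat := if z == y then x else z.
Definition renp x y (e : nat * nat) := (ren x y e.1, ren x y e.2).

Lemma map_pairs (f : nat -> nat) s :
  map (fun e => (f e.1, f e.2)) (pairs s) = pairs (map f s).
Proof.
elim: s => [|a s IH] //.
rewrite pairs_cons /= pairs_cons; case: s IH => [|b s] IH //=.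
by rewrite IH.
Qed.

Lemma contract_mem (x y : nat) (p q : seq nat) (e : nat * nat) :
  uniq (p ++ x :: y :: q) -> e.1 != x -> e.2 != y ->
  (e \in pairs (p ++ x :: y :: q)) = (renp x y e \in pairs (p ++ x :: q)).
Proof.
case: e => u v /= U ux vy.
have rv : ren x y v = v by rewrite /ren (negbTE vy).
rewrite /renp /= rv.
have xp : x \notin p by apply: contraTN U => xp; rewrite cat_uniq /= xp !andbF.
have yp : y \notin p by apply: contraTN U => yp; rewrite cat_uniq /= yp !orbT !andbF.
move: U; rewrite cat_uniq /= !in_cons !negb_or => /and3P [_ _ /and3P [/andP [xy xq] yq _]].
rewrite pairs_cat (pairs_cat p x q) !mem_cat.
rewrite (in_pairs_cons u v x) (in_pairs_cons _ v x) in_pairs_cons.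
rewrite (negbTE ux) /=.
rewrite /ren; case: (u =P y) => [-> | uy].
  have -> : ((y, v) \in pairs (rcons p x)) = false.
    by apply/negP => /pairs_rcons_fst; apply/negP.
  have -> : ((x, v) \in pairs (rcons p x)) = false.
    by apply/negP => /pairs_rcons_fst; apply/negP.
  have -> : ((y, v) \in pairs q) = false.
    by apply/negP => /pairs_fst; apply/negP.
  have -> : ((x, v) \in pairs q) = false.
    by apply/negP => /pairs_fst; apply/negP.
  by rewrite !eqxx.
by rewrite (negbTE ux) /=.
Qed.

Lemma avoid_contract x y p q E :
  uniq (p ++ x :: y :: q) ->
  (forall e, e \in E -> (e.1 != x) && (e.2 != y)) ->
  avoid E (p ++ x :: y :: q) = avoid (map (renp x y) E) (p ++ x :: q).
Proof.
move=> U HE; rewrite /avoid all_map; apply: eq_in_all => e /HE /andP [h1 h2] /=.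
by rewrite (contract_mem _ _ _ _ _ U h1 h2).
Qed.

Lemma uniq_cat_notin (p s : seq nat) z : uniq (p ++ s) -> z \in s -> z \notin p.
Proof.
rewrite cat_uniq => /and3P [_ /hasPn H _] zs.
exact: H.
Qed.

Lemma contract U x y E : uniq U -> x \in U -> y \in U -> x != y ->
  (forall e, e \in E -> (e.1 != x) && (e.2 != y)) ->
  count (fun a => ((x,y) \in pairs a) && avoid E a) (permutations U) =
  count (avoid (map (renp x y) E)) (permutations (rem y U)).
Proof.
move=> UU xU yU xy HE.
apply: (@count_bij _ _ _ _ _ (rem y) (ins x y)); rewrite ?permutations_uniq //.
  move=> a; rewrite mem_permutations => pa /andP [/pairs_split [p [q ea]] av].
  have Ua : uniq a by rewrite (perm_uniq pa).
  have xp : x \notin p by apply: (@uniq_cat_notin p (x :: y :: q)); rewrite -?ea // !in_cons eqxx ?orbT.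
  have yp : y \notin p by apply: (@uniq_cat_notin p (x :: y :: q)); rewrite -?ea // !in_cons eqxx ?orbT.
  have ra : rem y a = p ++ x :: q by rewrite ea rem_cat2 //= (negbTE xy) /= eqxx.
  rewrite ra mem_permutations; split.
  - have ya : y \in a by rewrite ea mem_cat !in_cons eqxx !orbT.
    have := perm_to_rem ya; have := perm_to_rem yU.
    rewrite ra => h1 h2.
    have : perm_eq (y :: (p ++ x :: q)) (y :: rem y U).
      by apply: perm_trans (perm_trans pa h1); rewrite perm_sym.
    by rewrite perm_cons.
  - have Ua' : uniq (p ++ x :: y :: q) by rewrite -ea.
    by rewrite -(avoid_contract x y p q E Ua' HE) -ea.
  - by rewrite ins_cat.
move=> b; rewrite mem_permutations => pb av.
have Ub : uniq b by rewrite (perm_uniq pb) rem_uniq.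
have xb : x \in b by rewrite (perm_mem pb) (mem_rem_uniq _ UU) inE xU andbT.
have yb : y \notin b by rewrite (perm_mem pb) (mem_rem_uniqF _ UU).
case/splitPr: xb pb Ub av yb => p q pb Ub av yb.
have xp : x \notin p by apply: (@uniq_cat_notin p (x :: q)); rewrite // !in_cons eqxx.
have yp : y \notin p by move: yb; rewrite mem_cat negb_or => /andP [].
have yq : y \notin q by move: yb; rewrite mem_cat negb_or in_cons negb_or => /andP [_ /andP []].
rewrite ins_cat // mem_permutations.
have pe : perm_eq (p ++ x :: y :: q) U.
  have h : perm_eq (p ++ x :: y :: q) (y :: (p ++ x :: q)).
    have -> : p ++ x :: y :: q = (p ++ [:: x]) ++ [:: y] ++ q by rewrite -catA.
    by rewrite perm_catCA /= -catA.
  apply: (perm_trans h); rewrite perm_sym; apply: (perm_trans (perm_to_rem yU)).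
  by rewrite perm_cons perm_sym.
have Ua : uniq (p ++ x :: y :: q) by rewrite (perm_uniq pe).
split => //.
- by rewrite pairs_cat mem_cat in_pairs_cons !eqxx orTb orbT (avoid_contract x y p q E Ua HE).
- by rewrite rem_cat2 //= (negbTE xy) /= eqxx.
Qed.

Definition cnt U E := count (avoid E) (permutations U).

Lemma split_count (L : seq (seq nat)) e E :
  count (avoid E) L = count (avoid (e :: E)) L + count (fun a => (e \in pairs a) && avoid E a) L.
Proof.
elim: L => [|a L IH] //=; rewrite IH.
by case: (e \in pairs a); case: (avoid E a) => /=; rewrite ?addnS.
Qed.

Lemma cnt_nil U : uniq U -> cnt U [::] = (size U)`!.
Proof.
move=> UU; rewrite /cnt -(size_permutations UU) -count_predT.
by apply: eq_count => a.
Qed.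

Fixpoint Bn (n k : nat) : int :=
  match k with
  | 0 => Posz (n`!)
  | k'.+1 => if k' is 0 then Posz (n`!) else (Bn n k' - Bn n.-1 k')%R
  end.

Fixpoint Cn (n k : nat) : int :=
  match k with
  | 0 => 0%R
  | k'.+1 => if k' is 0 then Posz (n`!) else (Bn n k - Cn n.-1 k')%R
  end.

Lemma ren_id x y s : y \notin s -> map (ren x y) s = s.
Proof.
move=> ys; rewrite -[RHS]map_id; apply/eq_in_map => z zs /=.
rewrite /ren; case: eqP => // ezy; move: ys; by rewrite -ezy zs.
Qed.

Lemma path_count k : forall c U, size c = k.+1 -> uniq U -> uniq c -> {subset c <= U} ->
  Posz (cnt U (pairs c)) = Bn (size U) k.+1.
Proof.
elim: k => [|k IH] c U.
  case: c => [|c0 [|]] //= _ UU _ _.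
  by rewrite cnt_nil.
case: c => [|c0 [|c1 r]] // [sr] UU.
rewrite !cons_uniq !in_cons negb_or => /and3P [/andP [c01 c0r] c1r Ur] sub.
have c0U : c0 \in U by apply: sub; rewrite in_cons eqxx.
have c1U : c1 \in U by apply: sub; rewrite !in_cons eqxx orbT.
have e1 := split_count (permutations U) (c0, c1) (pairs (c1 :: r)).
rewrite (contract U c0 c1 (pairs (c1 :: r)) UU c0U c1U c01) in e1; last first.
  move=> [u v] /= uv; apply/andP; split.
    apply/eqP => eu; move: (pairs_fst _ _ _ uv); rewrite eu in_cons (negbTE c0r) orbF => /eqP e.
    by rewrite e eqxx in c01.
  by apply/eqP => ev; move: (pairs_snd_cons _ _ _ _ uv); rewrite ev (negbTE c1r).
rewrite /renp map_pairs /= {1}/ren eqxx ren_id // in e1.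
have h1 : Posz (cnt U (pairs (c1 :: r))) = Bn (size U) k.+1.
  apply: IH => //=; rewrite ?sr ?Ur ?c1r //.
  by move=> z zr; apply: sub; rewrite in_cons zr orbT.
have h2 : Posz (cnt (rem c1 U) (pairs (c0 :: r))) = Bn (size (rem c1 U)) k.+1.
  apply: IH => //=; rewrite ?sr ?Ur ?c0r //; first exact: rem_uniq.
  move=> z; rewrite in_cons (mem_rem_uniq _ UU) inE => /orP [/eqP -> | zr].
    by rewrite c0U c01.
  rewrite sub ?andbT; last by rewrite !in_cons zr !orbT.
  by apply/eqP => ez; move: c1r; rewrite -ez zr.
rewrite size_rem // in h2.
have -> : Bn (size U) k.+2 = (Bn (size U) k.+1 - Bn (size U).-1 k.+1)%R by [].
rewrite -h1 -h2 /cnt e1 PoszD.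
have -> : pairs [:: c0, c1 & r] = (c0, c1) :: pairs (c1 :: r) by [].
by rewrite addrK.
Qed.

Definition cyc (c : seq nat) := pairs (rcons c (head 0 c)).

Lemma cnt_rcons U E e : cnt U (rcons E e) = cnt U (e :: E).
Proof. by apply: eq_count => a; rewrite /avoid all_rcons. Qed.

Lemma cycle_count k : forall c U, size c = k.+1 -> uniq U -> uniq c -> {subset c <= U} ->
  Posz (cnt U (cyc c)) = Cn (size U) k.+1.
Proof.
elim: k => [|k IH] c U.
  case: c => [|c0 [|]] // _ UU _ _.
  rewrite /cyc /= -(cnt_nil _ UU); congr Posz; apply: eq_in_count => a.
  rewrite mem_permutations => pa; rewrite /avoid /=.
  have Ua : uniq a by rewrite (perm_uniq pa).
  rewrite andbT; apply/negP => /(pairs_neq _ _ _ Ua). by rewrite eqxx.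
case: c => [|c0 s] // [ss] UU; case/lastP: s ss => [|r' l] // ss.
rewrite size_rcons in ss; case: ss => ss.
rewrite cons_uniq rcons_uniq mem_rcons in_cons negb_or => /andP [/andP [c0l c0r] /andP [lr Ur]] sub.
have c0U : c0 \in U by apply: sub; rewrite in_cons eqxx.
have lU : l \in U by apply: sub; rewrite in_cons mem_rcons in_cons eqxx orbT.
have lc0 : l != c0 by rewrite eq_sym.
have ec : cyc (c0 :: rcons r' l) = rcons (pairs (c0 :: rcons r' l)) (l, c0).
  by rewrite /cyc /= pairs_rcons last_rcons.
have e1 := split_count (permutations U) (l, c0) (pairs (c0 :: rcons r' l)).
rewrite (contract U l c0 (pairs (c0 :: rcons r' l)) UU lU c0U lc0) in e1; last first.
  move=> [u v] /= uv; apply/andP; split.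
    have : (u, v) \in pairs (rcons (c0 :: r') l) by [].
    move/pairs_rcons_fst; apply: contraTneq => ->.
    by rewrite in_cons negb_or eq_sym c0l lr.
  apply/eqP => ev; move: (pairs_snd_cons _ _ _ _ uv).
  by rewrite ev mem_rcons in_cons (negbTE c0l) (negbTE c0r).
rewrite /renp map_pairs /= {1}/ren eqxx ren_id in e1; last first.
  by rewrite mem_rcons in_cons negb_or c0l c0r.
have h1 : Posz (cnt U (pairs (c0 :: rcons r' l))) = Bn (size U) k.+2.
  apply: path_count => //; first by rewrite /= size_rcons ss.
  by rewrite cons_uniq rcons_uniq mem_rcons in_cons negb_or c0l c0r lr Ur.
have h2 : Posz (cnt (rem c0 U) (cyc (l :: r'))) = Cn (size (rem c0 U)) k.+1.
  apply: IH => //=; rewrite ?ss //; first exact: rem_uniq.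
    by rewrite lr Ur.
  move=> z zc; rewrite (mem_rem_uniq _ UU).
  rewrite inE sub ?andbT; last by move: zc; rewrite !in_cons mem_rcons in_cons => /orP [->|->]; rewrite ?orbT.
  move: zc; rewrite in_cons => /orP [/eqP -> // | zr].
  by apply/eqP => ez; move: c0r; rewrite -ez zr.
rewrite size_rem // in h2.
have -> : Cn (size U) k.+2 = (Bn (size U) k.+2 - Cn (size U).-1 k.+1)%R by [].
rewrite -h1 -h2 ec cnt_rcons /cnt e1 PoszD.
by rewrite addrK.
Qed.

Lemma pairs_iota m a : pairs (a :: iota a.+1 m) = [seq (i, i.+1) | i <- iota a m].
Proof.
elim: m a => [|m IH] a //.
by rewrite /= -IH.
Qed.

Lemma last_iota m a : last a (iota a.+1 m) = a + m.
Proof.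
elim: m a => [|m IH] a /=; first by rewrite addn0.
by rewrite IH addSnnS.
Qed.

Lemma patterns_cyc m : patterns m.+1 = cyc (iota 1 m.+1).
Proof.
rewrite /patterns /cyc /= pairs_rcons pairs_iota last_iota -cats1.
by rewrite add1n.
Qed.

Lemma D_Cn m : Posz (D m.+1) = Cn m.+1 m.+1.
Proof.
rewrite /D /=.
have -> : count (avoids_all m.+1) (arrangements m.+1) = cnt (iota 1 m.+1) (cyc (iota 1 m.+1)).
  apply: eq_count => a; rewrite /avoids_all patterns_cyc /avoid.
  by apply: eq_all => e; rewrite contains_pairs -surjective_pairing.
have := @cycle_count m (iota 1 m.+1) (iota 1 m.+1).
rewrite size_iota iota_uniq; apply => //.
Qed.

Local Open Scope ring_scope.

Lemma Bn_rec k : forall n, (k.+1 <= n)%N ->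
  Bn n.+1 k.+2 = (Posz n) * Bn n k.+1 + (Posz k) * Bn n.-1 k.
Proof.
elim: k => [|k IH] n hn.
  have -> : Bn n.+1 2 = Posz (n.+1)`! - Posz n`! by [].
  have -> : Bn n 1 = Posz n`! by [].
  rewrite factS PoszM mul0r addr0.
  ring.
case: n hn => [|m] // hm.
have e1 : Bn m.+2 k.+3 = Bn m.+2 k.+2 - Bn m.+1 k.+2 by [].
have e2 : Bn m.+2 k.+2 = Posz m.+1 * Bn m.+1 k.+1 + Posz k * Bn m k := IH m.+1 (ltnW hm).
have e3 := IH m hm.
have e4 : Bn m.+1 k.+2 = Bn m.+1 k.+1 - Bn m k.+1 by [].
have e5 : Bn m.+1 k.+1 = (Posz m.+1) * Bn m k.+1 + (Posz k) * Bn m.-1 k.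
  apply: (addIr (- Bn m k.+1)); rewrite -e4 e3; ring.
rewrite e1 e2 e4 e5.
case: k {IH e1 e2 e3 e4 e5} hm => [|k] hm.
  ring.
have -> : Bn m k.+2 = Bn m k.+1 - Bn m.-1 k.+1 by [].
ring.
Qed.

Lemma Cn_formula m : Cn m.+2 m.+2 = Posz m.+1 * Bn m.+1 m.+1 + (-1) ^+ m.+1.
Proof.
elim: m => [|m IH]; first by [].
have -> : Cn m.+3 m.+3 = Bn m.+3 m.+3 - Cn m.+2 m.+2 by [].
have e : Bn m.+3 m.+3 = Posz m.+2 * Bn m.+2 m.+2 + Posz m.+1 * Bn m.+1 m.+1 :=
  Bn_rec m.+1 m.+2 (leqnn _).
rewrite e IH !exprS; ring.
Qed.

Lemma BC m : Bn m.+1 m.+1 = Cn m.+1 m.+1 + Posz (D m).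
Proof.
case: m => [|m]; first by [].
rewrite D_Cn.
have -> : Cn m.+2 m.+2 = Bn m.+2 m.+2 - Cn m.+1 m.+1 by [].
ring.
Qed.

Theorem corollary3p3 (n : nat) : (2 <= n)%N ->
  (D n)%:Z = (n.-1)%:Z * ((D n.-1)%:Z + (D n.-2)%:Z) + (-1) ^+ n.-1.
Proof.
case: n => [|[|m]] // _.
have -> : (m.+2).-1 = m.+1 by [].
have -> : (m.+2).-2 = m by [].
by rewrite !D_Cn Cn_formula BC.
Qed.
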